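(* Let $m,p\ge1$, matrices in $\mathbb{R}^{m\times p}$ being viewed as $m$-tuples of slices $P^{(1)},\dots,P^{(m)}\in\mathbb{R}^p$ with Frobenius inner product $\langle\cdot,\cdot\rangle$ and Frobenius norm $\|\cdot\|$. Let $f:\mathbb{R}^{m\times p}\to\mathbb{R}$ be differentiable, fix $\theta\in\mathbb{R}^{m\times p}$ with all slices $\theta^{(j)}\ne0$, and let $\xi$ be a random matrix in $\mathbb{R}^{m\times p}$ with $\mathbb{E}[\xi]=0$ (integrable). Set the stochastic gradient $\tilde g=\nabla f(\theta)+\xi$. Assume that almost surely every slice $\tilde g^{(j)}\ne0$ and the angle $\phi^{(j)}$ between $\tilde g^{(j)}$ and $\theta^{(j)}$ satisfies $\sin(\phi^{(j)})\ge\gamma$ for a constant $\gamma>0$, for all $j$. Define slice-wise $\hat\theta^{(j)}=\theta^{(j)}/\|\theta^{(j)}\|$, $v^{(j)}=\tilde g^{(j)}-\langle\tilde g^{(j)},\hat\theta^{(j)}\rangle\hat\theta^{(j)}$, $\hat v^{(j)}=v^{(j)}/\|v^{(j)}\|$. Then $$\mathbb{E}_{\xi}\big[\langle \tilde g,\hat v\rangle\big]\ \ge\ \gamma\,\|\nabla f(\theta)\|.$$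
   Context: Stochastic version of the simplified Mano step (no momentum, static Oblique manifold normalization over the $m$ slices), where the update direction $\hat v$ is built from the stochastic gradient $\tilde g$, an unbiased estimator of $\nabla f(\theta)$. *)

(* Defs.v *)
From HB Require Import structures.
From mathcomp Require Import all_boot all_order all_algebra.
From mathcomp Require Import all_classical all_reals all_analysis.
Set Implicit Arguments. Unset Strict Implicit. Unset Printing Implicit Defensive.
Import Order.TTheory GRing.Theory Num.Theory.
Import numFieldNormedType.Exports.
Local Open Scope ring_scope.

Definition frob_dot {R : realType} {m p : nat} (A B : 'M[R]_(m, p)) : R :=
  \sum_(i < m) \sum_(j < p) A i j * B i j.
Definition frob_norm {R : realType} {m p : nat} (A : 'M[R]_(m, p)) : R :=
  Num.sqrt (frob_dot A A).

Definition slice {R : realType} {m p : nat} (A : 'M[R]_(m, p)) (j : 'I_m) : 'rV[R]_p :=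
  row j A.

Definition angle {R : realType} {p : nat} (u w : 'rV[R]_p) : R :=
  acos (frob_dot u w / (frob_norm u * frob_norm w)).

Definition grad {R : realType} {m p : nat} (f : 'M[R]_(m, p) -> R) (th : 'M[R]_(m, p))
  : 'M[R]_(m, p) := \matrix_(i, j) ('D_(delta_mx i j) f th).

Definition vhat {R : realType} {m p : nat} (g th : 'M[R]_(m, p)) : 'M[R]_(m, p) :=
  \matrix_(j, k)
    (let thh := (frob_norm (slice th j))^-1 *: slice th j in
     let v := slice g j - frob_dot (slice g j) thh *: thh in
     ((frob_norm v)^-1 *: v) 0 k).

(* Main.v *)
Require Import Defs.
From HB Require Import structures.
From HB Require Import structures.
From mathcomp Require Import all_boot all_order all_algebra.
From mathcomp Require Import all_classical all_reals all_analysis.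
From mathcomp Require Import ring lra.
From mathcomp Require Import measurable_realfun.
Import Order.TTheory GRing.Theory Num.Theory.
Import numFieldNormedType.Exports.
Local Open Scope ring_scope.
Set Implicit Arguments.

Section Lin.
Variables (R : realType) (m p : nat).
Implicit Types A B C : 'M[R]_(m, p).

Lemma dotC A B : frob_dot A B = frob_dot B A.
Proof. by apply: eq_bigr => i _; apply: eq_bigr => j _; rewrite mulrC. Qed.

Lemma dotDl A B C : frob_dot (A + B) C = frob_dot A C + frob_dot B C.
Proof.
rewrite /frob_dot -big_split; apply: eq_bigr => i _.
rewrite -big_split; apply: eq_bigr => j _; rewrite !mxE; exact: mulrDl.
Qed.

Lemma dotZl a A B : frob_dot (a *: A) B = a * frob_dot A B.
Proof.
rewrite /frob_dot mulr_sumr; apply: eq_bigr => i _.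
rewrite mulr_sumr; apply: eq_bigr => j _; rewrite !mxE; by rewrite mulrA.
Qed.

Lemma dotNl A B : frob_dot (- A) B = - frob_dot A B.
Proof. by rewrite -scaleN1r dotZl mulN1r. Qed.

Lemma dotBl A B C : frob_dot (A - B) C = frob_dot A C - frob_dot B C.
Proof. by rewrite dotDl dotNl. Qed.

Lemma dotDr A B C : frob_dot C (A + B) = frob_dot C A + frob_dot C B.
Proof. by rewrite dotC dotDl !(dotC C). Qed.

Lemma dotZr a A B : frob_dot B (a *: A) = a * frob_dot B A.
Proof. by rewrite dotC dotZl dotC. Qed.

Lemma dotBr A B C : frob_dot C (A - B) = frob_dot C A - frob_dot C B.
Proof. by rewrite dotC dotBl !(dotC C). Qed.

Lemma dot_ge0 A : 0 <= frob_dot A A.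
Proof. by apply: sumr_ge0 => i _; apply: sumr_ge0 => j _; exact: sqr_ge0. Qed.

Lemma fnorm_ge0 A : 0 <= frob_norm A.
Proof. exact: sqrtr_ge0. Qed.

Lemma fnormE A : frob_norm A ^+ 2 = frob_dot A A.
Proof. by rewrite sqr_sqrtr // dot_ge0. Qed.

Lemma fdot_eq0 A : frob_dot A A = 0 -> A = 0.
Proof.
move=> h; apply/matrixP => i j; rewrite mxE.
have h1 := psumr_eq0P (fun i _ => sumr_ge0 _ (fun j _ => sqr_ge0 (A i j))) h.
have h2 := psumr_eq0P (fun j _ => sqr_ge0 (A i j)) (h1 i isT) (i:=j) isT.
by apply/eqP; rewrite -sqrf_eq0 h2.
Qed.

Lemma fnorm_gt0 A : A != 0 -> 0 < frob_norm A.
Proof.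
move=> hA; rewrite sqrtr_gt0 lt_neqAle dot_ge0 andbT eq_sym.
by apply/negP => /eqP /fdot_eq0 h; rewrite h eqxx in hA.
Qed.

Lemma proj_id (g u : 'M[R]_(m, p)) : frob_dot u u = 1 ->
  let v := g - frob_dot g u *: u in
  [/\ frob_dot g v = frob_dot v v &
      frob_dot v v = frob_dot g g - (frob_dot g u) ^+ 2].
Proof.
move=> hu v; rewrite /v !(dotBl, dotBr, dotZl, dotZr) hu (dotC u g); split; ring.
Qed.

Lemma dot_le_norm (g u : 'M[R]_(m, p)) : (frob_dot u u = 1 \/ u = 0) -> frob_dot g u <= frob_norm g.
Proof.
case=> [hu|->]; last first.
  by rewrite /frob_dot big1 ?fnorm_ge0 // => i _; rewrite big1 // => j _; rewrite mxE mulr0.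
have [_ h] := proj_id g hu.
have h1 : (frob_dot g u) ^+ 2 <= frob_dot g g.
  have := dot_ge0 (g - frob_dot g u *: u); rewrite h; lra.
apply: (le_trans (ler_norm _)); rewrite -sqrtr_sqr; by rewrite ler_sqrt ?dot_ge0.
Qed.

Lemma dot_normalized (a : 'M[R]_(m, p)) : frob_dot a ((frob_norm a)^-1 *: a) = frob_norm a.
Proof.
rewrite dotZr -fnormE; have [->|h] := eqVneq (frob_norm a) 0.
  by rewrite invr0 mul0r.
by rewrite expr2 mulrA mulVf // mul1r.
Qed.

Lemma normalized_unit (a : 'M[R]_(m, p)) : a != 0 ->
  frob_dot ((frob_norm a)^-1 *: a) ((frob_norm a)^-1 *: a) = 1.
Proof.
move=> ha; have hn := fnorm_gt0 _ ha.
rewrite dotZl dotZr -fnormE; field; by rewrite gt_eqF.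
Qed.

End Lin.
Arguments dotC {R m p}.
Arguments dotDl {R m p}.
Arguments dotZl {R m p}.
Arguments dotNl {R m p}.
Arguments dotBl {R m p}.
Arguments dotDr {R m p}.
Arguments dotZr {R m p}.
Arguments dotBr {R m p}.
Arguments dot_ge0 {R m p}.
Arguments fnorm_ge0 {R m p}.
Arguments fnormE {R m p}.
Arguments fdot_eq0 {R m p}.
Arguments fnorm_gt0 {R m p}.
Arguments proj_id {R m p}.
Arguments dot_le_norm {R m p}.
Arguments dot_normalized {R m p}.
Arguments normalized_unit {R m p}.

Section Slice.
Variables (R : realType) (p : nat).

Lemma slice_key (g t : 'rV[R]_p) (gamma : R) : t != 0 ->
  let thh := (frob_norm t)^-1 *: t in
  let v := g - frob_dot g thh *: thh in
  frob_dot g ((frob_norm v)^-1 *: v) = frob_norm v /\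
  (g != 0 -> gamma <= sin (angle g t) -> gamma * frob_norm g <= frob_norm v).
Proof.
move=> ht thh v.
have hu : frob_dot thh thh = 1 by exact: normalized_unit.
have [h1 h2] := proj_id g _ hu.
split.
  by rewrite dotZr h1 -dotZr dot_normalized.
move=> hg hgam.
have ng0 : 0 < frob_norm g by apply: fnorm_gt0.
have nt0 : 0 < frob_norm t by apply: fnorm_gt0.
set c := frob_dot g t / (frob_norm g * frob_norm t).
have hc : frob_dot g thh = c * frob_norm g.
  rewrite /thh dotZr /c; field; by rewrite !gt_eqF.
have hvv : frob_dot v v = frob_norm g ^+ 2 * (1 - c ^+ 2).
  by rewrite h2 hc -fnormE; ring.
have hc1 : 0 <= 1 - c ^+ 2.
have := dot_ge0 v; rewrite hvv => H.
  by rewrite -(pmulr_rge0 _ (exprn_gt0 2 ng0)).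
have hc2 : -1 <= c <= 1 by apply/andP; split; nra.
move: hgam; rewrite /angle -/c sin_acos //.
have -> : frob_norm v = frob_norm g * Num.sqrt (1 - c ^+ 2).
  by rewrite /frob_norm hvv sqrtrM ?sqr_ge0 // sqrtr_sqr ger0_norm // ?dot_ge0 // sqrtr_ge0.
move=> H; rewrite mulrC; apply: ler_wpM2l => //; exact: ltW.
Qed.

Lemma rdot (x y : 'rV[R]_p) : frob_dot x y = \sum_(k < p) x 0 k * y 0 k.
Proof. by rewrite /frob_dot big_ord1. Qed.

End Slice.
Arguments slice_key {R p}.
Arguments rdot {R p}.

Section Meas.
Context d (T : measurableType d) (R : realType).

Definition mmeas a b (X : T -> 'M[R]_(a, b)) :=
  forall i k, measurable_fun setT (fun x => X x i k).

Lemma mmeas_cst a b (A : 'M[R]_(a, b)) : mmeas (fun _ => A).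
Proof. by move=> i k; exact: measurable_cst. Qed.

Lemma mmeasD a b (X Y : T -> 'M[R]_(a, b)) : mmeas X -> mmeas Y ->
  mmeas (fun x => X x + Y x).
Proof.
move=> hX hY i k.
rewrite (_ : (fun x => (X x + Y x) i k) = (fun x => X x i k) \+ (fun x => Y x i k)).
  exact: measurable_realfun.measurable_funD.
by apply/funext => x; rewrite mxE.
Qed.

Lemma mmeasN a b (X : T -> 'M[R]_(a, b)) : mmeas X -> mmeas (fun x => - X x).
Proof.
move=> hX i k.
rewrite (_ : (fun x => (- X x) i k) = \- (fun x => X x i k)).
  exact: measurable_realfun.measurable_funN.
by apply/funext => x; rewrite mxE.
Qed.

Lemma mmeasZ a b (r : T -> R) (X : T -> 'M[R]_(a, b)) : measurable_fun setT r ->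
  mmeas X -> mmeas (fun x => r x *: X x).
Proof.
move=> hr hX i k.
rewrite (_ : (fun x => (r x *: X x) i k) = r \* (fun x => X x i k)).
  exact: measurable_realfun.measurable_funM.
by apply/funext => x; rewrite mxE.
Qed.

Lemma mmeas_slice a b (X : T -> 'M[R]_(a, b)) j : mmeas X ->
  mmeas (fun x => slice (X x) j).
Proof.
move=> hX i k.
rewrite (_ : (fun x => (slice (X x) j) i k) = (fun x => X x j k)) //.
by apply/funext => x; rewrite mxE.
Qed.

Lemma meas_dot a b (X Y : T -> 'M[R]_(a, b)) : mmeas X -> mmeas Y ->
  measurable_fun setT (fun x => frob_dot (X x) (Y x)).
Proof.
move=> hX hY; rewrite /frob_dot.
apply: measurable_sum => i; apply: measurable_sum => k.
exact: measurable_realfun.measurable_funM.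
Qed.

Lemma meas_norm a b (X : T -> 'M[R]_(a, b)) : mmeas X ->
  measurable_fun setT (fun x => frob_norm (X x)).
Proof.
move=> hX; rewrite /frob_norm.
exact: (measurableT_comp (measurable_realfun.continuous_measurable_fun (@sqrt_continuous R)) (meas_dot hX hX)).
Qed.

Lemma ae_le_int (mu : measure T R) (f g : T -> \bar R) :
  measurable_fun setT f -> measurable_fun setT g ->
  {ae mu, forall x, (f x <= g x)%E} ->
  (\int[mu]_x f x <= \int[mu]_x g x)%E.
Proof.
move=> mf mg ae; rewrite integralE [leRHS]integralE; apply: leeB.
- apply: (ae_ge0_le_integral measurableT (fun x _ => funepos_ge0 _ x)
    (measurable_funepos mf) (fun x _ => funepos_ge0 _ x) (measurable_funepos mg)).
  move: ae; apply: filterS => x fg _.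
  by apply: (@funepos_le _ _ [set x] f g) => [y|]; rewrite ?inE //= => ->.
- apply: (ae_ge0_le_integral measurableT (fun x _ => funeneg_ge0 _ x)
    (measurable_funeneg mg) (fun x _ => funeneg_ge0 _ x) (measurable_funeneg mf)).
  move: ae; apply: filterS => x fg _.
  by apply: (@funeneg_le _ _ [set x] f g) => [y|]; rewrite ?inE //= => ->.
Qed.

End Meas.
Arguments mmeas {d T R a b}.
Arguments mmeas_cst {d T R a b}.
Arguments mmeasD {d T R a b X Y}.
Arguments mmeasN {d T R a b X}.
Arguments mmeasZ {d T R a b r X}.
Arguments mmeas_slice {d T R a b X} j.
Arguments meas_dot {d T R a b X Y}.
Arguments meas_norm {d T R a b X}.
Arguments ae_le_int {d T R mu f g}.

Lemma sumsq_le (R : realType) (s : seq nat) (F : nat -> R) : (forall i, 0 <= F i) ->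
  \sum_(i <- s) F i ^+ 2 <= (\sum_(i <- s) F i) ^+ 2.
Proof.
move=> F0; elim: s => [|a s IH]; first by rewrite !big_nil expr0n.
rewrite !big_cons; have S0 : 0 <= \sum_(i <- s) F i by apply: sumr_ge0.
have := F0 a; nra.
Qed.

Lemma sumsq_le_ord (R : realType) m (F : 'I_m -> R) : (forall i, 0 <= F i) ->
  \sum_(i < m) F i ^+ 2 <= (\sum_(i < m) F i) ^+ 2.
Proof.
move=> F0; elim: m F F0 => [|m IH] F F0; first by rewrite !big_ord0 expr0n.
rewrite !big_ord_recr /=.
have S0 : 0 <= \sum_(i < m) F (widen_ord (leqnSn m) i) by apply: sumr_ge0.
have := IH (fun i => F (widen_ord (leqnSn m) i)) (fun i => F0 _).
have := F0 ord_max; nra.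
Qed.

Lemma dotrows (R : realType) m p (A B : 'M[R]_(m, p)) :
  frob_dot A B = \sum_(j < m) frob_dot (slice A j) (slice B j).
Proof.
rewrite /frob_dot; apply: eq_bigr => j _; rewrite big_ord1.
by apply: eq_bigr => k _; rewrite !mxE.
Qed.

Lemma norm_le_rows (R : realType) m p (A : 'M[R]_(m, p)) :
  frob_norm A <= \sum_(j < m) frob_norm (slice A j).
Proof.
have S0 : 0 <= \sum_(j < m) frob_norm (slice A j) by apply: sumr_ge0 => j _; exact: fnorm_ge0.
rewrite -(ger0_norm S0) -sqrtr_sqr {1}/frob_norm ler_sqrt ?sqr_ge0 //.
rewrite (dotrows _ A A); apply: le_trans (@sumsq_le_ord R m (fun j => frob_norm (slice A j)) (fun j => fnorm_ge0 (slice A j))).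
by apply: ler_sum => j _; rewrite fnormE.
Qed.

Lemma int_sumE d (T : measurableType d) (R : realType) (P : probability T R)
  (I : Type) (s : seq I) (h : I -> T -> R) :
  (forall i, P.-integrable setT (fun x => (h i x)%:E)) ->
  P.-integrable setT (fun x => (\sum_(i <- s) h i x)%:E) /\
  (\int[P]_x (\sum_(i <- s) h i x)%:E = \sum_(i <- s) \int[P]_x (h i x)%:E)%E.
Proof.
move=> hi.
have -> : (fun x => (\sum_(i <- s) h i x)%:E) = (fun x => \sum_(i <- s) (h i x)%:E)%E.
  by apply/funext => x; rewrite sumEFin.
split; first by apply: integrable_sum.
by apply: integral_sum.
Qed.

Unset Implicit Arguments.

Theorem mainTheorem2 (R : realType) (m p : nat) (hm : (0 < m)%N) (hp : (0 < p)%N)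
  (f : 'M[R]_(m, p) -> R) (th : 'M[R]_(m, p))
  (hf : differentiable f th)
  (hth : forall j : 'I_m, slice th j != 0)
  (d : measure_display) (T : measurableType d) (P : probability T R)
  (xi : T -> 'M[R]_(m, p))
  (hxi_int : forall i j, P.-integrable setT (fun x => (xi x i j)%:E))
  (hxi_mean : forall i j, (\int[P]_x (xi x i j)%:E = 0)%E)
  (gamma : R) (hgamma : 0 < gamma)
  (has : {ae P, forall x, forall j : 'I_m,
      slice (grad f th + xi x) j != 0 /\
      gamma <= sin (angle (slice (grad f th + xi x) j) (slice th j))}) :
  (\int[P]_x (frob_dot (grad f th + xi x) (vhat (grad f th + xi x) th))%:E
     >= (gamma * frob_norm (grad f th))%:E)%E.
Proof.
set G := grad f th.
pose thh j := (frob_norm (slice th j))^-1 *: slice th j.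
pose vv (A : 'M[R]_(m, p)) j := slice A j - frob_dot (slice A j) (thh j) *: thh j.
pose u j := (frob_norm (slice G j))^-1 *: slice G j.
have hxim : mmeas xi.
  by move=> i k; apply/measurable_EFinP; exact: (measurable_int _ (hxi_int i k)).
have hgm : mmeas (fun x => G + xi x) := mmeasD (mmeas_cst G) hxim.
have slice_vhat A j : slice (vhat A th) j = (frob_norm (vv A j))^-1 *: vv A j.
  by apply/rowP => k; rewrite /vhat /slice [LHS]mxE mxE.
have F_eq x : frob_dot (G + xi x) (vhat (G + xi x) th)
    = \sum_(j < m) frob_norm (vv (G + xi x) j).
  rewrite (dotrows _ (G + xi x)); apply: eq_bigr => j _; rewrite slice_vhat.
  by have [-> _] := slice_key (slice (G + xi x) j) (slice th j) 0 (hth j).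
pose H x := \sum_(j < m) \sum_(k < p)
   (gamma * (G j k * u j 0 k) + (gamma * u j 0 k) * xi x j k).
have H_eq x : H x = gamma * \sum_(j < m) frob_dot (slice (G + xi x) j) (u j).
  rewrite mulr_sumr; apply: eq_bigr => j _; rewrite rdot mulr_sumr.
  by apply: eq_bigr => k _; rewrite !mxE; ring.
have mF : measurable_fun setT
    (fun x => (frob_dot (G + xi x) (vhat (G + xi x) th))%:E).
  apply/measurable_EFinP.
  rewrite (_ : (fun x => _) = (fun x => \sum_(j < m) frob_norm (vv (G + xi x) j))); last first.
    by apply/funext => x; rewrite F_eq.
  apply: measurable_sum => j; apply: meas_norm; rewrite /vv.
  apply: mmeasD; first exact: mmeas_slice.
  apply: mmeasN; apply: mmeasZ; last exact: mmeas_cst.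
  by apply: meas_dot; [exact: mmeas_slice | exact: mmeas_cst].
have mH : measurable_fun setT (fun x => (H x)%:E).
  apply/measurable_EFinP; rewrite /H.
  apply: measurable_sum => j; apply: measurable_sum => k.
  apply: measurable_funD; first exact: measurable_cst.
  by apply: measurable_funM; [exact: measurable_cst | exact: hxim].
have step1 : (\int[P]_x (H x)%:E <=
    \int[P]_x (frob_dot (G + xi x) (vhat (G + xi x) th))%:E)%E.
  apply: ae_le_int => //.
  move: has; apply: filterS => x hx.
  rewrite lee_fin H_eq F_eq mulr_sumr; apply: ler_sum => j _.
  have [hne hs] := hx j.
  have [_ h2] := slice_key (slice (G + xi x) j) (slice th j) gamma (hth j).
  apply: le_trans (h2 hne hs).
  apply: ler_wpM2l; first exact: ltW.
  apply: dot_le_norm.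
  have [h0|hn] := eqVneq (slice G j) 0.
    by right; rewrite /u h0 scaler0.
  by left; apply: normalized_unit.
have step2 : (\int[P]_x (H x)%:E = (gamma * \sum_(j < m) frob_norm (slice G j))%:E)%E.
  have hint j k : P.-integrable setT (fun x =>
      (gamma * (G j k * u j 0 k) + (gamma * u j 0 k) * xi x j k)%:E).
    rewrite (_ : (fun x => _) = (fun x => (gamma * (G j k * u j 0 k))%:E
                 + (gamma * u j 0 k)%:E * (xi x j k)%:E)%E); last first.
      by apply/funext => x; rewrite EFinD EFinM.
    apply: integrableD => //; first exact: finite_measure_integrable_cst.
    exact: integrableZl.
  have hJ j : P.-integrable setT (fun x => (\sum_(k < p)
      (gamma * (G j k * u j 0 k) + (gamma * u j 0 k) * xi x j k))%:E).
    exact: (int_sumE P _ _ (hint j)).1.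
  rewrite /H (int_sumE P _ _ hJ).2.
  under eq_bigr => j _ do rewrite (int_sumE P _ _ (hint j)).2.
  have hterm j k : (\int[P]_x (gamma * (G j k * u j 0 k) + (gamma * u j 0 k) * xi x j k)%:E
      = (gamma * (G j k * u j 0 k))%:E)%E.
    rewrite (_ : (fun x => _) = (fun x => (gamma * (G j k * u j 0 k))%:E
                 + (gamma * u j 0 k)%:E * (xi x j k)%:E)%E); last first.
      by apply/funext => x; rewrite EFinD EFinM.
    rewrite integralD //; last exact: integrableZl.
      rewrite integral_cst //; set z := (X in ((_ * X) + _)%E = _); have -> : z = 1%E by exact: probability_setT.
      by rewrite mule1 integralZl // hxi_mean mule0 adde0.
    exact: finite_measure_integrable_cst.
  under eq_bigr => j _ do under eq_bigr => k _ do rewrite hterm.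
  under eq_bigr => j _ do rewrite sumEFin. rewrite sumEFin; congr (_%:E); rewrite mulr_sumr; apply: eq_bigr => j _.
  rewrite -(dot_normalized (slice G j)) rdot mulr_sumr; apply: eq_bigr => k _.
  by rewrite /u /slice !mxE.
apply: le_trans step1; rewrite step2 lee_fin.
apply: ler_wpM2l; first exact: ltW.
exact: norm_le_rows.
Qed.
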